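(* Under the setting and assumptions of the AIRC closed loop (with $A$ Metzler and Hurwitz, $g_1\neq0$, all parameters positive), let $(z_1^*(\eta),z_2^*(\eta))$ denote the controller components of the unique equilibrium with $z_1^*>0$, i.e. $z_1^*(\eta)$ is the unique positive root of $P_1(z)=\eta g_1k_iz^2+(g_0-r)\eta z-g_nk_p\mu r$ and $z_2^*=\mu/(\eta z_1^* )$. Then, as $\eta\to\infty$: (1) if $r>g_0$, then $(z_1^*,z_2^* )\to\big((r-g_0)/(g_1k_i),\,0\big)$; (2) if $r<g_0$, then $(z_1^*,z_2^* )\to\big(0,\,(g_0-r)/(g_nrk_p)\big)$; (3) if $r=g_0$, then for every $\eta>0$, $z_1^*=\sqrt{\dfrac{g_nk_p\mu r}{\eta g_1k_i}}$ and $z_2^*=\sqrt{\dfrac{\theta g_1k_i}{\eta g_nk_p}}$; in particular both tend to $0$ while $\eta z_1^*z_2^*=\mu$ for all $\eta$.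
   Context: Setting: $A\in\mathbb{R}^{n\times n}$ Metzler (nonnegative off-diagonal entries) and Hurwitz stable (all eigenvalues with negative real part), $b_0\in\mathbb{R}^n_{\ge0}$, $\mu,\theta,k_i,k_p,\eta>0$, $r:=\mu/\theta$, $g_1:=-e_n^TA^{-1}e_1$, $g_n:=-e_n^TA^{-1}e_n$, $g_0:=-e_n^TA^{-1}b_0$, with $g_1\ne0$. The closed-loop system is $\dot x=Ax+k_iz_1e_1-k_px_nz_2e_n+b_0$, $\dot z_1=\mu-\eta z_1z_2$, $\dot z_2=\theta x_n-\eta z_1z_2$, and $e_i$ denotes the $i$-th standard basis vector. *)

(* Defs.v *)
From HB Require Import structures.
From mathcomp Require Import all_boot all_order all_algebra.
From mathcomp Require Import complex.
From mathcomp Require Import all_classical all_reals all_analysis.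
Set Implicit Arguments. Unset Strict Implicit. Unset Printing Implicit Defensive.
Import Order.TTheory GRing.Theory Num.Theory.
Local Open Scope ring_scope.

Definition metzler (R : realType) (n : nat) (A : 'M[R]_n) : Prop :=
  forall i j : 'I_n, i != j -> 0 <= A i j.

Definition hurwitz (R : realType) (n : nat) (A : 'M[R]_n) : Prop :=
  forall z : R[i], root (map_poly (real_complex R) (char_poly A)) z ->
    complex.Re z < 0.

(* Indices: e_1 is ord0, e_n is ord_max (matrices are (n+1) x (n+1)). *)
Definition g1 (R : realType) (n : nat) (A : 'M[R]_n.+1) : R :=
  - (invmx A) ord_max ord0.
Definition gn (R : realType) (n : nat) (A : 'M[R]_n.+1) : R :=
  - (invmx A) ord_max ord_max.
Definition g0 (R : realType) (n : nat) (A : 'M[R]_n.+1) (b0 : 'cV[R]_n.+1) : R :=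
  - (invmx A *m b0) ord_max ord0.

Definition P1 (R : realType) (g1 g0 gn ki kp mu r eta z : R) : R :=
  eta * g1 * ki * z ^+ 2 + (g0 - r) * eta * z - gn * kp * mu * r.

(* Main.v *)
Require Import Defs.
From HB Require Import structures.
From mathcomp Require Import all_boot all_order all_algebra.
From mathcomp Require Import complex.
From mathcomp Require Import all_classical all_reals all_analysis.
From mathcomp Require Import ring lra.
Import Order.TTheory GRing.Theory Num.Theory numFieldNormedType.Exports.
Local Open Scope ring_scope.
Local Open Scope classical_set_scope.

Section Core.
Variable R : realType.

Lemma Zmono (N : nat) (Mt : 'M[R]_N) :
  (forall i j, i != j -> Mt i j <= 0) ->
  forall e : 'cV_N, (forall i, 0 < e i 0) -> (forall i, 0 < (Mt *m e) i 0) ->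
  forall x : 'cV_N, (forall i, 0 <= (Mt *m x) i 0) -> forall i, 0 <= x i 0.
Proof.
move=> Z e epos Mepos x Mx i.
pose F := fun k => x k 0 / e k 0.
case: (@arg_minP _ _ _ i predT F isT) => k _ kmin.
set c := F k.
have xge : forall j, c * e j 0 <= x j 0.
  move=> j; have := kmin j isT; rewrite /F -/c => h.
  by rewrite -ler_pdivlMr.
have c0 : 0 <= c.
  rewrite leNgt; apply/negP => cneg.
  have : (Mt *m x) k 0 <= c * (Mt *m e) k 0.
    rewrite !mxE mulr_sumr; apply: ler_sum => j _.
    case: (eqVneq k j) => [<-|kj].
      have -> : x k 0 = c * e k 0 by rewrite /c /F divfK // gt_eqF.
      by rewrite mulrCA.
    by rewrite mulrCA; apply: (ler_wnM2l (Z _ _ kj)); apply: xge.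
  move: (Mx k) (Mepos k) => h1 h2 h3.
  have : c * (Mt *m e) k 0 < 0 by rewrite nmulr_rlt0.
  lra.
exact: le_trans (mulr_ge0 c0 (ltW (epos i))) (xge i).
Qed.

End Core.

Section Core2.
Variable R : realType.

Lemma Zstrict (N : nat) (Mt : 'M[R]_N) :
  (forall i j, i != j -> Mt i j <= 0) ->
  forall x : 'cV_N, (forall i, 0 <= x i 0) -> (forall i, 0 < (Mt *m x) i 0) ->
  forall i, 0 < x i 0.
Proof.
move=> Z x x0 Mx i; rewrite lt_neqAle x0 andbT eq_sym; apply/negP => /eqP xi.
have := Mx i; rewrite mxE (bigD1 i) //= xi mulr0 add0r.
rewrite ltNge; apply/negP/negPn; apply: sumr_le0 => j ji.
by apply: mulr_le0_ge0; [apply: Z; rewrite eq_sym|].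
Qed.

Variable N : nat.
Variable A : 'M[R]_N.
Hypothesis HM : metzler A.
Hypothesis HH : hurwitz A.

Let q := char_poly A.
Let P := char_poly_mx A.
Let Bt (t : R) : 'M[R]_N := t%:M - A.

Lemma hq t : 0 <= t -> q.[t] != 0.
Proof.
move=> t0; apply/negP => /eqP qt.
have := HH (t%:C)%C; rewrite /root horner_map qt /=.
have -> : ((0 : R)%:C)%C = 0 by [].
by rewrite eqxx => /(_ isT); rewrite /= ltNge t0.
Qed.

Lemma evalP t : map_mx (horner_eval t) P = Bt t.
Proof.
by apply/matrixP => i j; rewrite !mxE /horner_eval; case: (i == j); rewrite /= !hornerE.
Qed.

Lemma detB t : \det (Bt t) = q.[t].
Proof. by rewrite -evalP det_map_mx. Qed.

Lemma adjB t i j : \adj (Bt t) i j = (\adj P i j).[t].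
Proof. by rewrite -evalP -map_mx_adj mxE. Qed.

Lemma ZB t i j : i != j -> Bt t i j <= 0.
Proof. by move=> ij; rewrite !mxE (negbTE ij) /= mulr0n sub0r oppr_le0; apply: HM. Qed.

Lemma Bshift t u (e : 'cV[R]_N) i :
  (Bt t *m e) i 0 = (Bt u *m e) i 0 + (t - u) * e i 0.
Proof.
rewrite /Bt !mulmxBl !mul_scalar_mx !mxE.
by ring.
Qed.

Definition good t := exists e : 'cV[R]_N, (forall i, 0 < e i 0) /\ (forall i, 0 < (Bt t *m e) i 0).

Lemma good_up u t : good u -> u <= t -> good t.
Proof.
move=> [e [ep Bp]] ut; exists e; split => // i.
rewrite (Bshift t u); apply: ltr_wpDr => //; apply: mulr_ge0; [lra| exact: ltW].
Qed.


Lemma good_large : exists T, 0 <= T /\ good T.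
Proof.
pose T := 1 + \sum_i \sum_j `|A i j|.
have Sge : 0 <= \sum_i \sum_j `|A i j| by apply: sumr_ge0 => i _; apply: sumr_ge0.
exists T; split; first by rewrite /T; lra.
exists (const_mx 1); split => [i|i]; first by rewrite mxE.
rewrite /Bt mulmxBl mul_scalar_mx !mxE.
under eq_bigr do rewrite mxE mulr1.
have h1 : \sum_j A i j <= \sum_j `|A i j|.
  by apply: ler_sum => j _; rewrite ler_norm.
have h2 : \sum_j `|A i j| <= \sum_i \sum_j `|A i j|.
  by rewrite [X in _ <= X](bigD1 i) //= lerDl; apply: sumr_ge0 => k _; apply: sumr_ge0 => j _.
rewrite /T in h1 h2 *; lra.
Qed.

Lemma good_down s : good s -> exists2 d, 0 < d & forall t, s - d < t -> good t.
Proof.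
move=> [e [ep Bp]].
pose F := fun k => (Bt s *m e) k 0 / e k 0.
pose d := \big[Num.min/1]_i F i.
have Fp : forall i, 0 < F i by move=> i; rewrite /F divr_gt0.
have dp : 0 < d.
  rewrite /d; apply: (big_ind (fun x => 0 < x)) => // x y x0 y0.
  by rewrite lt_min x0 y0.
have dle : forall i, d <= F i by move=> i; rewrite /d (bigD1 i) //= ge_min lexx.
exists d => // t st.
case: (leP s t) => [ts|ts]; first by apply: (@good_up s t) => //; exists e.
exists e; split => // i.
rewrite (Bshift t s).
have := dle i; rewrite /F ler_pdivlMr // => h.
have := Bp i; have := ep i; nra.
Qed.


Lemma good_closed s : 0 <= s -> (forall t, s < t -> good t) -> good s.
Proof.
move=> s0 gt.
have hqs := @hq s s0.
pose p := \sum_i \sum_j \adj P i j.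
pose g := fun t => (t - s) * ((q.[t])^-1 * p.[t]).
have gc : g x @[x --> s] --> 0.
  have -> : 0 = (s - s) * ((q.[s])^-1 * p.[s]) by rewrite subrr mul0r.
  apply: cvgM; first by apply: cvgB; [exact: cvg_id | exact: cvg_cst].
  apply: cvgM; last exact: continuous_horner.
  by apply: cvgV => //; exact: continuous_horner.
have := @cvgr_lt R _ _ _ _ _ gc 1 ltr01.
move=> H; have {}H : \forall t \near nbhs s, g t < 1 by apply: H.
have := iffLR (nbhs_ballP _ _) H; case => eps eps0 Hb.
pose t := s + eps / 2.
move: eps0 => /= eps0.
have st : s < t by rewrite /t; lra.
have gt1 : g t < 1.
  apply: Hb; rewrite /ball /=. rewrite /t; rewrite opprD addrA subrr sub0r normrN.
  rewrite ger0_norm; lra.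
have t0 : 0 <= t by lra.
have [e [ep Bp]] := gt t st.
have Bu : Bt t \in unitmx by rewrite unitmxE unitfE detB hq.
pose dv : 'cV[R]_N := invmx (Bt t) *m const_mx 1.
have Bd : Bt t *m dv = const_mx 1 by rewrite /dv mulmxA mulmxV // mul1mx.
have dge : forall i, 0 <= dv i 0.
  move=> i; apply: (@Zmono _ _ (Bt t) (@ZB t) e ep Bp dv) => k; rewrite Bd mxE; exact: ler01.
have dgt : forall i, 0 < dv i 0.
  move=> i; apply: (@Zstrict _ (Bt t) (@ZB t) dv dge) => k; rewrite Bd mxE; exact: ltr01.
have dE : forall i, dv i 0 = (q.[t])^-1 * (\sum_j \adj P i j).[t].
  move=> i; rewrite /dv /invmx Bu mxE [X in _ = _ * X]horner_sum mulr_sumr.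
  apply: eq_bigr => j _; rewrite !mxE mulr1 detB.
  by move: (adjB t i j); rewrite !mxE => ->.
have gE : g t = (t - s) * \sum_i dv i 0.
  rewrite /g /p; congr (_ * _).
  rewrite [X in _ * X]horner_sum mulr_sumr.
  by apply: eq_bigr => i _; rewrite dE.
exists dv; split => // i.
rewrite (Bshift s t) Bd mxE.
have : dv i 0 <= \sum_i dv i 0.
  by rewrite (bigD1 i) //= lerDl; apply: sumr_ge0 => k _.
move: gt1; rewrite gE => h1 h2.
have : (t - s) * dv i 0 <= (t - s) * \sum_i dv i 0 by apply: ler_wpM2l => //; lra.
lra.
Qed.


Lemma good0 : good 0.
Proof.
have [T [T0 gT]] := good_large.
pose S := [set t : R | 0 <= t /\ good t].
have Sne : S !=set0 by exists T.
have Slb : has_lbound S by exists 0 => x [].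
pose s := inf S.
have s0 : 0 <= s by apply: lb_le_inf => // x [].
have gs : good s.
  apply: good_closed => // t st.
  have [u [u0 gu] ut] := @inf_adherent R S (t - s) ltac:(lra) (conj Sne Slb).
  by apply: (@good_up u t) => //; rewrite /s in ut; lra.
case: (eqVneq s 0) => [<- //|sn0].
have sp : 0 < s by rewrite lt_neqAle eq_sym sn0 s0.
have [d d0 Hd] := @good_down s gs.
pose t := Num.max 0 (s - d / 2).
have St : S t.
  split; first by rewrite /t le_max lexx.
  apply: Hd; rewrite /t lt_max; apply/orP; right; lra.
have := ge_inf Slb St; rewrite -/s /t le_max => /orP [|]; lra.
Qed.

Lemma inv_nonneg i j : 0 <= - (invmx A) i j.
Proof.
have [e [ep Bp]] := good0.
have B0 : Bt 0 = - A by apply/matrixP => k l; rewrite !mxE mul0rn sub0r.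
have Bu : Bt 0 \in unitmx by rewrite unitmxE unitfE detB hq.
have Ai : invmx (Bt 0) = - invmx A.
  rewrite B0 -scaleN1r invmxZ; last by rewrite scaleN1r -B0.
  by rewrite invrN1 scaleN1r.
pose x : 'cV[R]_N := col j (invmx (Bt 0)).
have Bx : forall k, (Bt 0 *m x) k 0 = (1%:M : 'M[R]_N) k j.
  move=> k; rewrite -(mulmxV Bu) !mxE; apply: eq_bigr => l _; rewrite !mxE.
  done.
have H := @Zmono _ _ (Bt 0) (@ZB 0) e ep Bp x.
have : 0 <= x i 0 by apply: H => k; rewrite Bx mxE; exact: ler0n.
by rewrite /x mxE Ai mxE.
Qed.

End Core2.

Section Lim.
Variable R : realType.

Lemma lim_of (f : R -> R) L :
  (forall eps, 0 < eps -> exists M, forall x, M < x -> `|f x - L| < eps) ->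
  f x @[x --> +oo] --> L.
Proof.
move=> H; apply/cvgrPdist_lt => eps e0.
have [M HM] := H eps e0.
exists M; split; first exact: num_real.
by move=> x Mx; rewrite distrC; apply: HM.
Qed.

Lemma lim_inv (f : R -> R) L K :
  (forall x, 0 < x -> `|f x - L| <= K / x) -> f x @[x --> +oo] --> L.
Proof.
move=> H; apply: lim_of => eps e0.
exists (`|K| / eps + 1); move=> x Mx.
have Kp : 0 <= `|K| / eps by rewrite divr_ge0 // ltW.
have x0 : 0 < x by lra.
apply: le_lt_trans (H x x0) _.
rewrite ltr_pdivrMr //.
have : `|K| < eps * x.
  have hh : `|K| / eps < x by lra.
  have : eps * (`|K| / eps) < eps * x by rewrite ltr_pM2l.
  by rewrite mulrCA divff ?gt_eqF // mulr1.
have := ler_norm K; lra.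
Qed.

Lemma lim_sq (f : R -> R) L K :
  (forall x, 0 < x -> `|f x - L| ^+ 2 <= K / x) -> f x @[x --> +oo] --> L.
Proof.
move=> H; apply: lim_of => eps e0.
have e20 : 0 < eps ^+ 2 by rewrite exprn_gt0.
exists (`|K| / eps ^+ 2 + 1); move=> x Mx.
have Kp : 0 <= `|K| / eps ^+ 2 by rewrite divr_ge0 // ltW.
have x0 : 0 < x by lra.
have h := H x x0.
have : K / x < eps ^+ 2.
  rewrite ltr_pdivrMr //.
  have : `|K| < eps ^+ 2 * x.
    have hh : `|K| / eps ^+ 2 < x by lra.
    have : eps ^+ 2 * (`|K| / eps ^+ 2) < eps ^+ 2 * x by rewrite ltr_pM2l.
    by rewrite mulrCA divff ?gt_eqF // mulr1.
  have := ler_norm K; lra.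
move=> h2.
have : `|f x - L| ^+ 2 < eps ^+ 2 by lra.
by rewrite ltr_pXn2r // ?nnegrE // ltW.
Qed.


Lemma case1 (a b c eta z : R) : 0 < a -> 0 < b -> 0 <= c -> 0 < eta -> 0 < z ->
  eta * a * z ^+ 2 - b * eta * z - c = 0 ->
  b / a <= z /\ `|z - b / a| <= (c / b) / eta.
Proof.
move=> a0 b0 c0 e0 z0 E.
pose w := z - b / a.
pose p := eta * (a * z).
have p0 : 0 < p by rewrite /p mulr_gt0 // mulr_gt0.
have Ew : w * p = c.
  have -> : w * p = eta * a * z ^+ 2 - b * eta * z by rewrite /w /p; field; rewrite gt_eqF.
  lra.
have w0 : 0 <= w.
  rewrite leNgt; apply/negP => wn.
  have : w * p < 0 by rewrite nmulr_rlt0.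
  lra.
have azb : b <= a * z by move: w0; rewrite /w subr_ge0 ler_pdivrMr // mulrC.
split; first by move: w0; rewrite /w subr_ge0.
rewrite ger0_norm // -/w.
have q0 : 0 <= w * eta by rewrite mulr_ge0 // ltW.
have : (w * eta) * b <= (w * eta) * (a * z) by apply: ler_wpM2l.
have -> : (w * eta) * (a * z) = c by rewrite -Ew /p; ring.
move=> h.
by rewrite ler_pdivlMr // ler_pdivlMr.
Qed.

Lemma case1z2 (a b eta z mu : R) : 0 < a -> 0 < b -> 0 < eta -> 0 < z -> 0 < mu ->
  b / a <= z -> `|mu / (eta * z) - 0| <= (mu * a / b) / eta.
Proof.
move=> a0 b0 e0 z0 m0 bz.
rewrite subr0 ger0_norm; last by rewrite divr_ge0 ?ltW // mulr_gt0.
have azb : b <= a * z by move: bz; rewrite ler_pdivrMr // mulrC.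
rewrite ler_pdivrMr ?mulr_gt0 //.
have -> : mu * a / b / eta * (eta * z) = mu * (a * z) / b by field; rewrite !gt_eqF.
rewrite ler_pdivlMr //.
by apply: ler_wpM2l => //; apply: ltW.
Qed.


Lemma case2 (a b c eta z mu : R) : 0 < a -> 0 < b -> 0 < eta -> 0 < z -> 0 < mu ->
  eta * a * z ^+ 2 + b * eta * z - c = 0 ->
  0 < c /\ `|z - 0| <= (c / b) / eta /\
  `|mu / (eta * z) - mu * b / c| <= (mu * a / b) / eta.
Proof.
move=> a0 b0 e0 z0 m0 E.
have cE : c = eta * z * (a * z + b) by rewrite -[c]add0r -E; ring.
have azb : 0 < a * z + b by rewrite addr_gt0 // mulr_gt0.
have c0 : 0 < c by rewrite cE !mulr_gt0.
split => //; split.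
  rewrite subr0 ger0_norm; last exact: ltW.
  rewrite ler_pdivlMr // ler_pdivlMr // cE.
  have : 0 <= eta * a * z ^+ 2 by rewrite !mulr_ge0 ?ltW // sqr_ge0.
  have -> : eta * z * (a * z + b) = eta * a * z ^+ 2 + z * eta * b by ring.
  lra.
have -> : mu / (eta * z) - mu * b / c = mu * a / (eta * (a * z + b)).
  by rewrite cE; field; rewrite !gt_eqF.
rewrite ger0_norm; last by rewrite divr_ge0 ?ltW // ?mulr_gt0.
rewrite ler_pdivrMr ?mulr_gt0 //.
have -> : mu * a / b / eta * (eta * (a * z + b)) = mu * a * ((a * z + b) / b).
  by field; rewrite !gt_eqF.
rewrite -[leLHS]mulr1; apply: ler_wpM2l; first by rewrite mulr_ge0 ?ltW.
by rewrite ler_pdivlMr // mul1r lerDr mulr_ge0 // ltW.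
Qed.

Lemma case3 (a c eta z mu : R) : 0 < a -> 0 < eta -> 0 < z -> 0 < mu ->
  eta * a * z ^+ 2 - c = 0 ->
  0 < c /\ `|z - 0| ^+ 2 <= (c / a) / eta /\
  `|mu / (eta * z) - 0| ^+ 2 <= (mu ^+ 2 * a / c) / eta.
Proof.
move=> a0 e0 z0 m0 E.
have cE : c = eta * a * z ^+ 2 by rewrite -[c]add0r -E; ring.
have c0 : 0 < c by rewrite cE !mulr_gt0 // exprn_gt0.
split => //; split.
  rewrite subr0 real_normK ?num_real // cE le_eqVlt; apply/orP; left; apply/eqP.
  by field; rewrite !gt_eqF.
rewrite subr0 real_normK ?num_real // cE le_eqVlt; apply/orP; left; apply/eqP.
by field; rewrite !gt_eqF.
Qed.

End Lim.

Theorem mainTheorem2 (R : realType) (n : nat) (A : 'M[R]_n.+1) (b0 : 'cV[R]_n.+1)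
  (mu theta ki kp : R) (z1s z2s : R -> R) :
  metzler A -> hurwitz A -> (forall i, 0 <= b0 i ord0) ->
  0 < mu -> 0 < theta -> 0 < ki -> 0 < kp ->
  g1 A != 0 ->
  (forall eta, 0 < eta ->
     0 < z1s eta /\
     P1 (g1 A) (g0 A b0) (gn A) ki kp mu (mu / theta) eta (z1s eta) = 0 /\
     z2s eta = mu / (eta * z1s eta)) ->
  let r := mu / theta in
  (r > g0 A b0 ->
     z1s x @[x --> +oo] --> (r - g0 A b0) / (g1 A * ki) /\
     z2s x @[x --> +oo] --> 0) /\
  (r < g0 A b0 ->
     z1s x @[x --> +oo] --> 0 /\
     z2s x @[x --> +oo] --> (g0 A b0 - r) / (gn A * r * kp)) /\
  (r = g0 A b0 ->
     (forall eta, 0 < eta ->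
        z1s eta = Num.sqrt ((gn A * kp * mu * r) / (eta * g1 A * ki)) /\
        z2s eta = Num.sqrt ((theta * g1 A * ki) / (eta * gn A * kp)) /\
        eta * z1s eta * z2s eta = mu) /\
     z1s x @[x --> +oo] --> 0 /\ z2s x @[x --> +oo] --> 0).
Proof.
move=> HM HH hb mu0 th0 ki0 kp0 g1n0 Heq r.
have g1ge : 0 <= g1 A by rewrite /g1; exact: (@inv_nonneg R n.+1 A HM HH ord_max _).
have gnge : 0 <= gn A by rewrite /gn; exact: (@inv_nonneg R n.+1 A HM HH ord_max _).
have g1p : 0 < g1 A by rewrite lt_neqAle eq_sym g1n0.
have r0 : 0 < r by rewrite /r divr_gt0.
have a0 : 0 < g1 A * ki by rewrite mulr_gt0.
have E : forall eta, 0 < eta ->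
  eta * (g1 A * ki) * z1s eta ^+ 2 + (g0 A b0 - r) * eta * z1s eta - gn A * kp * mu * r = 0.
  move=> eta eta0; have [_ [P _]] := Heq eta eta0; rewrite -P /P1 -/r; ring.
have c0 : 0 <= gn A * kp * mu * r by rewrite mulr_ge0 ?(ltW r0) // mulr_ge0 ?(ltW mu0) // mulr_ge0 ?(ltW kp0).
split.
  move=> rg; have bp : 0 < r - g0 A b0 by lra.
  have C1 : forall eta, 0 < eta -> (r - g0 A b0) / (g1 A * ki) <= z1s eta /\ `|z1s eta - (r - g0 A b0) / (g1 A * ki)| <= (gn A * kp * mu * r / (r - g0 A b0)) / eta.
    move=> eta e0; have [z0 _] := Heq eta e0.
    apply: (@case1 R (g1 A * ki) (r - g0 A b0) (gn A * kp * mu * r) eta (z1s eta)) => //.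
    rewrite -(E eta e0); ring.
  split.
    apply: (@lim_inv R _ _ (gn A * kp * mu * r / (r - g0 A b0))) => eta e0.
    by have [_ ->] := C1 eta e0.
  apply: (@lim_inv R _ _ (mu * (g1 A * ki) / (r - g0 A b0))) => eta e0.
  have [z0 [_ ->]] := Heq eta e0.
  by apply: case1z2 => //; have [-> _] := C1 eta e0.
split.
  move=> rg; have bp : 0 < g0 A b0 - r by lra.
  have C2 : forall eta, 0 < eta -> 0 < gn A * kp * mu * r /\ `|z1s eta - 0| <= (gn A * kp * mu * r / (g0 A b0 - r)) / eta /\ `|mu / (eta * z1s eta) - mu * (g0 A b0 - r) / (gn A * kp * mu * r)| <=
        (mu * (g1 A * ki) / (g0 A b0 - r)) / eta.
    move=> eta e0; have [z0 _] := Heq eta e0.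
    apply: case2 => //; rewrite -(E eta e0); ring.
  have [cp _] := C2 1 ltr01.
  have gnp : 0 < gn A.
    rewrite lt_neqAle gnge andbT eq_sym; apply/negP => /eqP g0'.
    by move: cp; rewrite g0' !mul0r ltxx.
  split.
    apply: (@lim_inv R _ _ (gn A * kp * mu * r / (g0 A b0 - r))) => eta e0.
    by have [_ [-> _]] := C2 eta e0.
  apply: (@lim_inv R _ _ (mu * (g1 A * ki) / (g0 A b0 - r))) => eta e0.
  have [z0 [_ ->]] := Heq eta e0.
  have -> : (g0 A b0 - r) / (gn A * r * kp) = mu * (g0 A b0 - r) / (gn A * kp * mu * r).
    by field; rewrite !gt_eqF.
  by have [_ [_ ->]] := C2 eta e0.
move=> rE.
have C3 : forall eta, 0 < eta -> 0 < gn A * kp * mu * r /\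
    `|z1s eta - 0| ^+ 2 <= (gn A * kp * mu * r / (g1 A * ki)) / eta /\
    `|mu / (eta * z1s eta) - 0| ^+ 2 <= (mu ^+ 2 * (g1 A * ki) / (gn A * kp * mu * r)) / eta.
  move=> eta e0; have [z0 _] := Heq eta e0.
  apply: (@case3 R (g1 A * ki) (gn A * kp * mu * r) eta (z1s eta) mu) => //.
  rewrite -(E eta e0) rE; ring.
have [cp _] := C3 1 ltr01.
have gnp : 0 < gn A.
  rewrite lt_neqAle gnge andbT eq_sym; apply/negP => /eqP g0'.
  by move: cp; rewrite g0' !mul0r ltxx.
split.
  move=> eta e0; have [z0 [_ z2E]] := Heq eta e0.
  have cE : gn A * kp * mu * r = eta * (g1 A * ki) * z1s eta ^+ 2.
    rewrite -[LHS]add0r -(E eta e0) rE; ring.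
  have gnE : gn A = eta * (g1 A * ki) * z1s eta ^+ 2 / (kp * mu * r).
    by rewrite -cE; field; rewrite !gt_eqF.
  split.
    rewrite cE.
    have -> : eta * (g1 A * ki) * z1s eta ^+ 2 / (eta * g1 A * ki) = z1s eta ^+ 2.
      by field; rewrite !gt_eqF.
    by rewrite sqrtr_sqr ger0_norm // ltW.
  split.
    rewrite z2E gnE /r.
    have -> : theta * g1 A * ki / (eta * (eta * (g1 A * ki) * z1s eta ^+ 2 / (kp * mu * (mu / theta))) * kp)
       = (mu / (eta * z1s eta)) ^+ 2.
      by field; rewrite !gt_eqF.
    by rewrite sqrtr_sqr ger0_norm // divr_ge0 ?ltW // mulr_gt0.
  by rewrite z2E; field; rewrite !gt_eqF.
split.
  apply: (@lim_sq R _ _ (gn A * kp * mu * r / (g1 A * ki))) => eta e0.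
  by have [_ [-> _]] := C3 eta e0.
apply: (@lim_sq R _ _ (mu ^+ 2 * (g1 A * ki) / (gn A * kp * mu * r))) => eta e0.
have [z0 [_ ->]] := Heq eta e0.
by have [_ [_ ->]] := C3 eta e0.
Qed.
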